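(* Consider a systematic $(\bar n,\bar k,\bar m)$ Strongly-MDS convolutional code, and suppose the sub-symbols of $\mathbf{x}[i]=(s_0[i],\dots,s_{\bar k-1}[i],p_0[i],\dots,p_{\bar n-\bar k-1}[i])$ are transmitted one per channel use, in this order, in the time interval $[i\bar n,(i+1)\bar n-1]$, for $i=0,1,\dots$. Then for each $j=0,1,\dots,\bar m$: (L1) if at most $\hat N\le(\bar n-\bar k)(j+1)$ transmitted sub-symbols are erased in the interval $[0,(j+1)\bar n-1]$, then $\mathbf{s}[0]=(s_0[0],\dots,s_{\bar k-1}[0])$ can be recovered by time $(j+1)\bar n-1$; (L2) if the channel introduces an erasure burst of $\hat B$ sub-symbols in the interval $[c,c+\hat B-1]$ with $\hat B\le(\bar n-\bar k)(j+1)$ and $0\le c\le\bar k-1$, then all erased source symbols are recovered by time $(j+1)\bar n-1$; (L3) if the channel introduces an erasure burst of $\hat B$ sub-symbols in the interval $[c,c+\hat B-1]$ with $0\le c\le\bar k-1$, followed by at most $\hat I$ isolated erasures, with $\hat B+\hat I\le(\bar n-\bar k)(j+1)$, then all erased symbols in the burst are recovered by time $(j+1)\bar n-1$.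
   Context: An $(\bar n,\bar k,\bar m)$ convolutional code over $\mathbb{F}_q$ maps source symbols $\mathbf{s}[i]\in\mathbb{F}_q^{\bar k}$ ($i\ge0$; $\mathbf{s}[i]=0$ for $i<0$) to $\mathbf{x}[i]=\big(\sum_{t=0}^{\bar m}\mathbf{s}^\dagger[i-t]\mathbf{G}_t\big)^\dagger\in\mathbb{F}_q^{\bar n}$ with $\mathbf{G}_t\in\mathbb{F}_q^{\bar k\times\bar n}$. It is systematic if $\mathbf{G}_0=[\mathbf{I}_{\bar k}\ \mathbf{H}_0]$ and $\mathbf{G}_t=[\mathbf{0}_{\bar k\times\bar k}\ \mathbf{H}_t]$ for $t\ge1$, so $\mathbf{x}[i]=(\mathbf{s}[i],\mathbf{p}[i])$ with $\mathbf{p}[i]=(\sum_{t=0}^{\bar m}\mathbf{s}^\dagger[i-t]\mathbf{H}_t)^\dagger\in\mathbb{F}_q^{\bar n-\bar k}$. Its $j$-th sub-symbol column distance is $d_j^c=\min\{\mathrm{wt}^c(\mathbf{x}[0],\dots,\mathbf{x}[j]) : \mathbf{s}[0]\neq0\}$, where $\mathrm{wt}^c$ counts nonzero entries (sub-symbols) in $\mathbb{F}_q$. A systematic Strongly-MDS code is a systematic $(\bar n,\bar k,\bar m)$ convolutional code with $d_j^c=(\bar n-\bar k)(j+1)+1$ for all $j=0,1,\dots,\bar m$. *)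

(* Defs.v *)
From HB Require Import structures.
From mathcomp Require Import all_boot all_order all_algebra all_field.
Set Implicit Arguments. Unset Strict Implicit. Unset Printing Implicit Defensive.
Import GRing.Theory.
Local Open Scope ring_scope.

(* Source sequence s : nat -> 'rV_k (s[i] = 0 for i < 0 is built in by
   using nat indices and only summing over t <= i). *)

Section Code.
Variables (F : finFieldType) (n k m : nat).
Variable H : 'I_m.+1 -> 'M[F]_(k, n - k).

Definition parity (s : nat -> 'rV[F]_k) (i : nat) : 'rV[F]_(n - k) :=
  \sum_(t < m.+1 | (t <= i)%N) s (i - t)%N *m H t.

Definition codeword (s : nat -> 'rV[F]_k) (i : nat) : 'rV[F]_(k + (n - k)) :=
  row_mx (s i) (parity s i).

(* the sub-symbol transmitted at channel use t: the (t mod n)-th entry of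
   x[t / n]  (when k <= n, k + (n - k) = n so the else-branch never occurs) *)
Definition sym (s : nat -> 'rV[F]_k) (t : nat) : F :=
  match ltnP (t %% n) (k + (n - k)) with
  | LtnNotGeq h => codeword s (t %/ n) 0 (Ordinal h)
  | _ => 0
  end.

Definition wtc (s : nat -> 'rV[F]_k) (j : nat) : nat :=
  count (fun t => sym s t != 0) (iota 0 (j.+1 * n)).

Definition is_col_dist (j d : nat) : Prop :=
  (forall s : nat -> 'rV[F]_k, s 0%N != 0 -> (d <= wtc s j)%N) /\
  (exists s : nat -> 'rV[F]_k, s 0%N != 0 /\ wtc s j = d).

Definition strongly_MDS : Prop :=
  forall j, (j <= m)%N -> is_col_dist j ((n - k) * j.+1 + 1)%N.

Definition agree_before (E : pred nat) (T : nat) (s s' : nat -> 'rV[F]_k) :=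
  forall t, (t < T)%N -> ~~ E t -> sym s t = sym s' t.

End Code.

(* Main.v *)
Require Import Defs.
From HB Require Import structures.
From mathcomp Require Import all_boot all_order all_algebra all_field.
From mathcomp Require Import zify.
Import GRing.Theory.
Local Open Scope ring_scope.

Lemma count_sub_in (T : eqType) (a b : pred T) (s : seq T) :
  (forall x, x \in s -> a x -> b x) -> (count a s <= count b s)%N.
Proof.
elim: s => //= x s IH h; rewrite leq_add //.
  by case ax: (a x) => //=; rewrite (h x (mem_head _ _) ax).
by apply: IH => y ys; apply: h; rewrite in_cons ys orbT.
Qed.

Lemma count_burst c B a L :
  (count (fun t => c <= t < c + B)%N (iota a L) <= c + B - maxn a c)%N.
Proof.
elim: L a => [|L IH] a //=.
move: (IH a.+1); case: (leqP c a) => h1; case: (ltnP a (c+B)) => h2 /= IHa; lia.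
Qed.

Lemma count_mem_iota (Iso : seq nat) a L :
  (count (fun t => t \in Iso) (iota a L) <= size Iso)%N.
Proof.
rewrite -size_filter; apply: uniq_leq_size.
  exact: filter_uniq (iota_uniq _ _).
by move=> x; rewrite mem_filter => /andP[].
Qed.

Section Proofs.
Variables (F : finFieldType) (n k m : nat).
Variable H : 'I_m.+1 -> 'M[F]_(k, n - k).

Lemma symE s t (h : (t %% n < k + (n - k))%N) :
  sym H s t = codeword H s (t %/ n)%N 0 (Ordinal h).
Proof.
rewrite /sym; case: ltnP => h'.
  by congr (codeword _ _ _ _ _); apply: val_inj.
by exfalso; rewrite leqNgt h in h'.
Qed.

Lemma sym0 s t : ~~ (t %% n < k + (n - k))%N -> sym H s t = 0.
Proof. by rewrite /sym; case: ltnP => // h; rewrite h. Qed.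

Lemma sym_eq s1 s2 t1 t2 : (t1 %% n = t2 %% n)%N ->
  codeword H s1 (t1 %/ n)%N = codeword H s2 (t2 %/ n)%N -> sym H s1 t1 = sym H s2 t2.
Proof.
move=> e1 e2; case: (ltnP (t1 %% n) (k + (n - k))) => h.
  have h2 := h; rewrite e1 in h2.
  rewrite (symE _ _ h) (symE _ _ h2) e2; congr (_ 0 _); exact: val_inj.
by rewrite !sym0 // -?e1 -ltnNge ltnS.
Qed.

Lemma codeword_sub s s' i :
  codeword H (fun l => s l - s' l) i = codeword H s i - codeword H s' i.
Proof.
rewrite /codeword opp_row_mx add_row_mx /parity -sumrB.
by congr row_mx; apply: eq_bigr => t _; rewrite mulmxBl.
Qed.

Lemma sym_sub s s' t :
  sym H (fun l => s l - s' l) t = sym H s t - sym H s' t.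
Proof.
case: (ltnP (t %% n) (k + (n - k))) => h.
  by rewrite !(symE _ _ h) codeword_sub !mxE.
by rewrite !sym0 ?subr0 // -ltnNge ltnS.
Qed.

Lemma codeword_shift d i l : (forall l, (l < i)%N -> d l = 0) ->
  codeword H (fun l => d (l + i)%N) l = codeword H d (l + i).
Proof.
move=> hz; rewrite /codeword; congr row_mx.
rewrite /parity [RHS](bigID (fun t : 'I_m.+1 => (t <= l)%N)) /=.
rewrite [X in _ = _ + X]big1 ?addr0; last first.
  by move=> t /andP[ht1 ht]; rewrite -ltnNge in ht; rewrite hz ?mul0mx //; lia.
apply: eq_big => [t|t ht].
  case: (leqP t l) => h /=; first by rewrite andbT (leq_trans h (leq_addr _ _)).
  by rewrite andbF.
congr (d _ *m _); lia.
Qed.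

Lemma sym_zero d t : (forall l, (l <= t %/ n)%N -> d l = 0) -> sym H d t = 0.
Proof.
move=> hz; case: (ltnP (t %% n) (k + (n - k))) => h; last first.
  by rewrite sym0 // -ltnNge ltnS.
rewrite (symE _ _ h) (_ : codeword H d (t %/ n)%N = 0) ?mxE //.
rewrite /codeword hz // /parity big1 ?row_mx0 // => i _.
by rewrite hz ?mul0mx // leq_subr.
Qed.

Hypothesis hkn : (k <= n)%N.
Hypothesis hM : strongly_MDS H.

Lemma core j i d : (0 < n)%N -> (i <= j)%N -> (j <= m)%N ->
  (forall l, (l < i)%N -> d l = 0) ->
  (count (fun t => sym H d t != 0%R) (iota (i * n) ((j - i).+1 * n))
     <= (n - k) * (j - i).+1)%N -> d i = 0.
Proof.
move=> hn hij hjm hz hc.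
case: (eqVneq (d i) 0) => // hne; exfalso.
have [hlo _] := hM (j - i)%N (leq_trans (leq_subr i j) hjm).
have := hlo (fun l => d (l + i)%N); rewrite add0n => /(_ hne).
have -> : wtc H (fun l => d (l + i)%N) (j - i) =
   count (fun t => sym H d t != 0%R) (iota (i * n) ((j - i).+1 * n)).
  rewrite /wtc -(addn0 (i * n)%N) iotaDl count_map; apply: eq_count => t /=.
  congr (_ != _); apply: sym_eq.
    by rewrite modnMDl.
  by rewrite codeword_shift // divnMDl // [(i + _)%N]addnC.
move: hc; lia.
Qed.

Lemma burst j (hj : (j <= m)%N) (E : pred nat) c B I (Iso : seq nat) :
  (c < k)%N -> (size Iso <= I)%N -> (B + I <= (n - k) * j.+1)%N ->
  (forall t, E t -> (c <= t < c + B)%N || (t \in Iso)) ->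
  forall s s', agree_before H E (j.+1 * n) s s' ->
  forall t, (c <= t < c + B)%N -> sym H s t = sym H s' t.
Proof.
move=> hck hI hBI hE s s' hag t ht.
have hn : (0 < n)%N by lia.
set d := fun l => s l - s' l.
have hd : forall i, (i * n < c + B)%N -> d i = 0.
  elim/ltn_ind => i IH hi.
  have hij : (i <= j)%N.
    case: (leqP i j) => // hji.
    have h1 : (j.+1 * n <= i * n)%N by rewrite leq_mul2r hji orbT.
    have h2 : (j.+1 * n = (n - k) * j.+1 + k * j.+1)%N
      by rewrite -mulnDl subnK // mulnC.
    have h3 : (k <= k * j.+1)%N by rewrite leq_pmulr.
    lia.
  apply: (@core j i d hn hij hj).
    move=> l hl; apply: IH => //.
    apply: leq_ltn_trans hi; rewrite leq_mul2r; apply/orP; right; exact: ltnW.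
  have hL : (i * n + (j - i).+1 * n = j.+1 * n)%N
    by rewrite -mulnDl; congr (_ * n)%N; lia.
  apply: (leq_trans (@count_sub_in _ _ (predU (fun t => c <= t < c + B)%N
                                          (fun t => t \in Iso)) _ _)).
    move=> x; rewrite mem_iota => /andP[_ hx] hnz.
    apply: hE; apply: contraNT hnz => hnE.
    rewrite /d sym_sub hag ?subrr //; lia.
  rewrite -(leq_add2r (count (predI (fun t => c <= t < c + B)%N
                                   (fun t => t \in Iso))
                    (iota (i * n) ((j - i).+1 * n)))) count_predUI.
  apply: leq_trans (leq_addr _ _).
  apply: leq_trans (leq_add (count_burst _ _ _ _) (count_mem_iota _ _ _)) _.
  case: i {IH hi hij hL} (hi) (hij) => [|i] hi hij.
    rewrite mul0n max0n subn0 addKn; lia.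
  have hP : (i.+1 * n = (n - k) * i.+1 + k * i.+1)%N
    by rewrite -mulnDl subnK // mulnC.
  have hQ : ((n - k) * j.+1 = (n - k) * (j - i.+1).+1 + (n - k) * i.+1)%N
    by rewrite -mulnDr; congr (_ * _)%N; lia.
  have h3 : (k <= k * i.+1)%N by rewrite leq_pmulr.
  have h4 : (n <= i.+1 * n)%N by rewrite leq_pmull.
  lia.
apply/eqP; rewrite -subr_eq0 -sym_sub; apply/eqP; apply: sym_zero => l hl.
apply: hd; apply: (leq_ltn_trans _ (_ : t < c + B)%N); last by case/andP: ht.
apply: leq_trans (leq_trunc_div t n); by rewrite leq_mul2r hl orbT.
Qed.

End Proofs.

(* "recovered by time (j+1)n-1" = uniquely determined by the non-erased
   received sub-symbols at channel uses t < (j+1)n. *)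
Theorem lemma1 (F : finFieldType) (n k m : nat)
    (H : 'I_m.+1 -> 'M[F]_(k, n - k)) :
  (k <= n)%N -> strongly_MDS H ->
  forall j : nat, (j <= m)%N ->
  (* (L1) *)
  (forall (E : pred nat) (N : nat),
     (count E (iota 0 (j.+1 * n)) <= N)%N -> (N <= (n - k) * j.+1)%N ->
     forall s s' : nat -> 'rV[F]_k,
       agree_before H E (j.+1 * n) s s' -> s 0%N = s' 0%N) /\
  (* (L2) *)
  (forall c B : nat,
     (c < k)%N -> (B <= (n - k) * j.+1)%N ->
     forall s s' : nat -> 'rV[F]_k,
       agree_before H (fun t => (c <= t < c + B)%N) (j.+1 * n) s s' ->
       forall t, (c <= t < c + B)%N -> (t %% n < k)%N ->
         sym H s t = sym H s' t) /\
  (* (L3) *)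
  (forall (c B I : nat) (Iso : seq nat),
     (c < k)%N ->
     (size Iso <= I)%N ->
     all (fun t => c + B < t)%N Iso ->
     (forall t, t \in Iso -> t.+1 \notin Iso) ->
     (B + I <= (n - k) * j.+1)%N ->
     forall s s' : nat -> 'rV[F]_k,
       agree_before H (fun t => (c <= t < c + B)%N || (t \in Iso)) (j.+1 * n) s s' ->
       forall t, (c <= t < c + B)%N -> sym H s t = sym H s' t).
Proof.
move=> hkn hM j hj; split; [|split].
- move=> E N hc hN s s' hag.
  case: (posnP k) => k0.
    by apply/rowP => -[y hy]; exfalso; move: hy; rewrite k0.
  have hn : (0 < n)%N by lia.
  suff: (fun l => s l - s' l) 0%N = 0 by move/eqP; rewrite subr_eq0 => /eqP.
  apply: (@core F n k m H hkn hM j 0 (fun l => s l - s' l) hn (leq0n _) hj) => [l //|].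
  rewrite mul0n subn0.
  apply: leq_trans hN; apply: leq_trans hc.
  apply: count_sub_in => x; rewrite mem_iota => /andP[_ hx] hnz.
  apply: contraNT hnz => hnE; rewrite sym_sub hag ?subrr //.
- move=> c B hck hB s s' hag t ht _.
  apply: (@burst F n k m H hkn hM j hj _ c B 0 [::]) hag t ht => //.
    by rewrite addn0.
  by move=> t' ->.
- move=> c B I Iso hck hI _ _ hBI s s' hag t ht.
  exact: (@burst F n k m H hkn hM j hj _ c B I Iso) hag t ht.
Qed.
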